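(* Let $T=K[x_1,\ldots,x_n,y_1,\ldots,y_m]$, let $\mathfrak m=(x_1,\ldots,x_n)$ and let $I\subset T$ be a monomial ideal. The following are equivalent: (a) $(I:x_1)\cap(\mathfrak mT+I)=I$; (b) whenever $x_1$ divides $u\in G(I)$, then $u=x_1y^b$ for some $b\in\mathbb{Z}_{\ge0}^m$, and $x_jy^b\in I$ for all $j=1,\ldots,n$.
   Context: $G(I)$ denotes the unique minimal set of monomial generators of the monomial ideal $I$, and $y^b=y_1^{b_1}\cdots y_m^{b_m}$ (a monomial in the $y$-variables only). *)

(* Defs.v *)
From HB Require Import structures.
From mathcomp Require Import all_boot all_order all_algebra.
Set Implicit Arguments. Unset Strict Implicit. Unset Printing Implicit Defensive.
Import GRing.Theory.
Local Open Scope ring_scope.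

(* The polynomial ring R[z_0, ..., z_(N-1)] as the iterated univariate
   polynomial ring R[z_0][z_1]...[z_(N-1)]. *)
Fixpoint mpoly (R : comNzRingType) (N : nat) : comNzRingType :=
  if N is N'.+1 then ({poly mpoly R N'} : comNzRingType) else R.

(* the variable z_i (i < N); z_i = 0 for i >= N, never used *)
Fixpoint mvar (R : comNzRingType) (N : nat) (i : nat) {struct N} : mpoly R N :=
  match N return mpoly R N with
  | 0 => 0
  | N'.+1 => if i == N' then 'X else (mvar R N' i)%:P
  end.

Definition mmon (R : comNzRingType) (N : nat) (e : 'I_N -> nat) : mpoly R N :=
  \prod_(i < N) mvar R N i ^+ e i.

Definition is_monomial (R : comNzRingType) (N : nat) (u : mpoly R N) : Prop :=
  exists e : 'I_N -> nat, u = @mmon R N e.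

Definition rdvd (T : comNzRingType) (a b : T) : Prop := exists h : T, b = h * a.

Definition ideal_gen (T : comNzRingType) (S : T -> Prop) (f : T) : Prop :=
  exists l : seq (T * T), (forall p, p \in l -> S p.2) /\
    f = \sum_(p <- l) p.1 * p.2.

Definition monomial_ideal (R : comNzRingType) (N : nat) (I : mpoly R N -> Prop) :=
  exists S : mpoly R N -> Prop, (forall u, S u -> is_monomial u) /\
    (forall f, I f <-> ideal_gen S f).

(* u is in G(I), the unique minimal set of monomial generators of the monomial
   ideal I: u is a monomial of I not divisible by any other monomial of I. *)
Definition in_mingens (R : comNzRingType) (N : nat) (I : mpoly R N -> Prop)
  (u : mpoly R N) : Prop :=
  is_monomial u /\ I u /\
  forall v, is_monomial v -> I v -> rdvd v u -> v = u.

(* In T = K[x_1..x_n, y_1..y_m] (with N = n + m variables):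
   x_(j+1) = z_j for j < n,   y_(k+1) = z_(n+k) for k < m. *)
Definition xv (R : comNzRingType) (n m : nat) (j : 'I_n) : mpoly R (n + m) :=
  mvar R (n + m) (lshift m j).
Definition yv (R : comNzRingType) (n m : nat) (k : 'I_m) : mpoly R (n + m) :=
  mvar R (n + m) (rshift n k).
Definition ymon (R : comNzRingType) (n m : nat) (b : 'I_m -> nat) : mpoly R (n + m) :=
  \prod_(k < m) @yv R n m k ^+ b k.

(* Main.v *)
Require Import Defs.
From HB Require Import structures.
From mathcomp Require Import all_boot all_order all_algebra.
From Stdlib Require Import Classical.
Set Implicit Arguments. Unset Strict Implicit.
Import GRing.Theory.
Local Open Scope ring_scope.

Fixpoint mcoef (R : comNzRingType) (N : nat) : mpoly R N -> ('I_N -> nat) -> R :=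
  match N return mpoly R N -> ('I_N -> nat) -> R with
  | 0 => fun f _ => f
  | N'.+1 => fun f e =>
      @mcoef R N' ((f : {poly mpoly R N'})`_(e ord_max))
        (fun i => e (widen_ord (leqnSn N') i))
  end.

Fixpoint mcst (R : comNzRingType) (N : nat) : R -> mpoly R N :=
  match N return R -> mpoly R N with
  | 0 => fun c => c
  | N'.+1 => fun c => ((@mcst R N' c)%:P : {poly mpoly R N'})
  end.

Definition leb N (d e : 'I_N -> nat) := [forall i, (d i <= e i)%N].

Lemma mcoef_ext R N (f : mpoly R N) (d e : 'I_N -> nat) :
  (forall i, d i = e i) -> mcoef f d = mcoef f e.
Proof.
elim: N f d e => [//|N IH] f d e H /=.
rewrite H; apply: IH => i; exact: H.
Qed.

Lemma mcoef0 R N (e : 'I_N -> nat) : mcoef (0 : mpoly R N) e = 0.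
Proof. elim: N e => [//|N IH] e /=. by rewrite coef0 IH. Qed.

Lemma mcoefD R N (f g : mpoly R N) (e : 'I_N -> nat) :
  mcoef (f + g) e = mcoef f e + mcoef g e.
Proof. elim: N f g e => [//|N IH] f g e /=. by rewrite coefD IH. Qed.

Lemma mmon_ext R N (d e : 'I_N -> nat) :
  (forall i, d i = e i) -> mmon R d = mmon R e.
Proof. move=> H; rewrite /mmon; apply: eq_bigr => i _; by rewrite H. Qed.

Lemma mmonD R N (d e : 'I_N -> nat) :
  mmon R (fun i => (d i + e i)%N) = mmon R d * mmon R e.
Proof. rewrite /mmon -big_split /=; apply: eq_bigr => i _; by rewrite exprD. Qed.

Lemma mmonS R N (e : 'I_N.+1 -> nat) :
  mmon R e = ((mmon R (fun i => e (widen_ord (leqnSn N) i)))%:P : {poly mpoly R N})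
     * 'X^(e ord_max).
Proof.
rewrite /mmon big_ord_recr /= eqxx rmorph_prod /=; congr (_ * _).
apply: eq_bigr => i _ /=. by rewrite ltn_eqF // rmorphXn.
Qed.

Lemma lebS N (d e : 'I_N.+1 -> nat) :
  leb d e = leb (fun i => d (widen_ord (leqnSn N) i)) (fun i => e (widen_ord (leqnSn N) i))
    && (d ord_max <= e ord_max)%N.
Proof.
apply/forallP/andP => [H|[/forallP H1 H2] i].
  by split; [apply/forallP => i; exact: H|exact: H].
case: (unliftP ord_max i) => [j ->|->] //.
have -> : lift ord_max j = widen_ord (leqnSn N) j by apply: val_inj; exact: lift_max.
exact: H1.
Qed.

Lemma coef_mmonM R N (d e : 'I_N -> nat) (f : mpoly R N) :
  mcoef (mmon R d * f) e = if leb d e then mcoef f (fun i => (e i - d i)%N) else 0.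
Proof.
elim: N d e f => [|N IH] d e f.
  by rewrite /mmon big_ord0 mul1r /leb; case: forallP => // [[]] [].
rewrite mmonS -mulrA /= coefCM coefXnM IH lebS.
case: ltnP => Hl.
  by rewrite andbF mcoef0; case: leb.
by rewrite andbT.
Qed.

Lemma forallS N (P : 'I_N.+1 -> bool) :
  [forall i, P i] = [forall i : 'I_N, P (widen_ord (leqnSn N) i)] && P ord_max.
Proof.
apply/forallP/andP => [H|[/forallP H1 H2] i].
  by split; [apply/forallP => i; exact: H|exact: H].
case: (unliftP ord_max i) => [j ->|->] //.
have -> : lift ord_max j = widen_ord (leqnSn N) j by apply: val_inj; exact: lift_max.
exact: H1.
Qed.

Lemma mcoef1 R N (e : 'I_N -> nat) :
  mcoef (1 : mpoly R N) e = if [forall i, e i == 0%N] then 1 else 0.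
Proof.
elim: N e => [|N IH] e.
  by case: forallP => // [[]] [].
rewrite /= coef1 forallS; case: eqP => H /=.
  by rewrite andbT IH.
by rewrite andbF mcoef0.
Qed.

Lemma mcoef_mmon R N (d e : 'I_N -> nat) :
  mcoef (mmon R d) e = if leb d e && [forall i, e i - d i == 0]%N then 1 else 0.
Proof.
rewrite -[mmon R d]mulr1 coef_mmonM mcoef1; by case: leb.
Qed.

Lemma mcoef_mmon_id R N (d : 'I_N -> nat) : mcoef (mmon R d) d = 1.
Proof.
rewrite mcoef_mmon; case: ifP => // /negP []; apply/andP; split; apply/forallP => i //.
by rewrite subnn.
Qed.

Lemma mcoef_mmon_nz R N (d e : 'I_N -> nat) :
  mcoef (mmon R d) e != 0 -> forall i, d i = e i.
Proof.
rewrite mcoef_mmon; case: ifP => [/andP [/forallP H1 /forallP H2] _ i|]; last by rewrite eqxx.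
apply/eqP; rewrite eqn_leq H1 /=; by rewrite -subn_eq0 H2.
Qed.

Lemma mmon_inj (R : comNzRingType) N (d e : 'I_N -> nat) :
  mmon R d = mmon R e -> forall i, d i = e i.
Proof.
move=> H; apply: (@mcoef_mmon_nz R); by rewrite H mcoef_mmon_id oner_neq0.
Qed.

Definition extE N (e : 'I_N -> nat) (j : nat) : 'I_N.+1 -> nat :=
  fun i => if unlift ord_max i is Some i' then e i' else j.

Lemma extE_w N (e : 'I_N -> nat) j i : extE e j (widen_ord (leqnSn N) i) = e i.
Proof.
have -> : widen_ord (leqnSn N) i = lift ord_max i by apply: val_inj; rewrite /=; symmetry; exact: lift_max.
by rewrite /extE liftK.
Qed.

Lemma extE_max N (e : 'I_N -> nat) j : extE e j ord_max = j.
Proof. by rewrite /extE unlift_none. Qed.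

Lemma decomp R N (Q : mpoly R N -> Prop) : Q 0 ->
  (forall a b, Q a -> Q b -> Q (a + b)) ->
  forall f, (forall e, mcoef f e != 0 -> Q (@mcst R N (mcoef f e) * mmon R e)) -> Q f.
Proof.
elim: N Q => [|N IH] Q Q0 QD f H.
  case: (eqVneq f 0) => [->//|nz].
  have := H (fun _ => 0%N) nz. by rewrite /mmon big_ord0 mulr1.
have -> : f = \sum_(j < size (f : {poly mpoly R N})) ((f : {poly _})`_j)%:P * 'X^j.
  rewrite -{1}[f]coefK poly_def; apply: eq_bigr => j _; by rewrite mul_polyC.
apply: big_ind => // j _.
apply: (IH (fun g => Q (g%:P * 'X^j))).
- by rewrite polyC0 mul0r.
- move=> a b Ha Hb; by rewrite polyCD mulrDl; apply: QD.
move=> e' nz.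
have hc : mcoef f (extE e' j) = mcoef ((f : {poly _})`_j) e'.
  rewrite /= extE_max; apply: mcoef_ext => i; exact: extE_w.
have := H (extE e' j); rewrite hc => /(_ nz).
rewrite mmonS extE_max (mmon_ext _ (extE_w e' j)) /= polyCM mulrA //.
Qed.

Lemma ig0 (T : comNzRingType) (S : T -> Prop) : ideal_gen S 0.
Proof. by exists [::]; rewrite big_nil. Qed.

Lemma igD (T : comNzRingType) (S : T -> Prop) a b :
  ideal_gen S a -> ideal_gen S b -> ideal_gen S (a + b).
Proof.
move=> [l1 [H1 ->]] [l2 [H2 ->]]; exists (l1 ++ l2); rewrite big_cat; split => //.
move=> p; rewrite mem_cat => /orP [] ?; [exact: H1|exact: H2].
Qed.

Lemma igM (T : comNzRingType) (S : T -> Prop) g a :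
  ideal_gen S a -> ideal_gen S (g * a).
Proof.
move=> [l [H ->]]; exists (map (fun p => (g * p.1, p.2)) l); split.
  by move=> p /mapP [q Hq ->]; apply: (H q Hq).
by rewrite big_map mulr_sumr; apply: eq_bigr => p _; rewrite mulrA.
Qed.

Lemma igS (T : comNzRingType) (S : T -> Prop) u : S u -> ideal_gen S u.
Proof.
move=> Hu; exists [:: (1, u)]; rewrite big_seq1 mul1r; split => // p.
by rewrite inE => /eqP ->.
Qed.

Lemma crit R N (S : mpoly R N -> Prop) (HS : forall u, S u -> is_monomial u) f :
  ideal_gen S f <-> forall e, mcoef f e != 0 -> exists d, S (mmon R d) /\ leb d e.
Proof.
split.
  move=> [l [Hl ->]] e; elim: l Hl => [|p l IHl] Hl; first by rewrite big_nil mcoef0 eqxx.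
  rewrite big_cons mcoefD.
  case: (eqVneq (mcoef (p.1 * p.2) e) 0) => [->|nz]; rewrite ?add0r.
    by apply: IHl => q Hq; apply: Hl; rewrite inE Hq orbT.
  move=> _.
  have Sp : S p.2 by apply: Hl; rewrite inE eqxx.
  have [d hd] := HS _ Sp.
  exists d; split; first by rewrite -hd.
  move: nz; rewrite hd mulrC coef_mmonM; case: leb => //; by rewrite eqxx.
move=> H; apply: decomp; [exact: ig0|exact: igD|].
move=> e /H [d [Sd le]].
have -> : mmon R e = mmon R (fun i => (e i - d i)%N) * mmon R d.
  rewrite -mmonD; apply: mmon_ext => i; rewrite subnK //; exact: (forallP le).
by rewrite mulrA; apply: igM; apply: igS.
Qed.

Definition dl N (i0 : 'I_N) : 'I_N -> nat := fun i => (i == i0 : nat).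

Lemma mmon_dl R N (i0 : 'I_N) : mmon R (dl i0) = mvar R N i0.
Proof.
rewrite /mmon (bigD1 i0) //= /dl eqxx expr1 big1 ?mulr1 // => i /negPf ->.
by rewrite expr0.
Qed.

Lemma xv_mmon R n m (j : 'I_n) : @xv R n m j = mmon R (dl (lshift m j)).
Proof. by rewrite mmon_dl. Qed.

Definition yexp n m (b : 'I_m -> nat) : 'I_(n + m) -> nat :=
  fun i => match split i with inl _ => 0%N | inr k => b k end.

Lemma yexp_l n m b (j : 'I_n) : @yexp n m b (lshift m j) = 0%N.
Proof. by rewrite /yexp (unsplitK (inl _ j)). Qed.

Lemma yexp_r n m b (k : 'I_m) : @yexp n m b (rshift n k) = b k.
Proof. by rewrite /yexp (unsplitK (inr _ k)). Qed.

Lemma ymon_mmon R n m b : @ymon R n m b = mmon R (@yexp n m b).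
Proof.
rewrite /mmon big_split_ord /= big1 ?mul1r.
  by apply: eq_bigr => k _; rewrite yexp_r.
by move=> j _; rewrite yexp_l expr0.
Qed.

Lemma leb_trans N (a b c : 'I_N -> nat) : leb a b -> leb b c -> leb a c.
Proof.
move=> /forallP H1 /forallP H2; apply/forallP => i; exact: leq_trans (H1 i) (H2 i).
Qed.

Lemma rdvd_leb (R : comNzRingType) N (g d : 'I_N -> nat) :
  rdvd (mmon R g) (mmon R d) -> leb g d.
Proof.
move=> [h Hh]; have := mcoef_mmon_id R d; rewrite Hh mulrC coef_mmonM.
case: leb => //; move=> /esym /eqP; by rewrite oner_eq0.
Qed.

Lemma sum_lt N (g d : 'I_N -> nat) : leb g d -> ~ (forall i, g i = d i) ->
  (\sum_i g i < \sum_i d i)%N.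
Proof.
move=> /forallP le ne.
have [i hi] : exists i, (g i < d i)%N.
  apply: NNPP => H; apply: ne => i; apply/eqP; rewrite eqn_leq le /=.
  by rewrite leqNgt; apply/negP => h; apply: H; exists i.
rewrite (bigD1 i) //= [X in (_ < X)%N](bigD1 i) //=.
rewrite -addSn leq_add // leq_sum // => k _; exact: le.
Qed.

Lemma minimal N (P : ('I_N -> nat) -> Prop) e : P e ->
  exists d, leb d e /\ P d /\ forall g, leb g d -> P g -> forall i, g i = d i.
Proof.
move: {2}(\sum_i e i)%N (leqnn (\sum_i e i)) => k.
elim: k e => [|k IH] e hk Pe.
  exists e; split; first by apply/forallP.
  split => // g le Pg; apply: NNPP => ne.
  have := sum_lt le ne; by rewrite ltnNge (leq_trans hk).
case: (classic (exists g, leb g e /\ P g /\ ~ (forall i, g i = e i))).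
  move=> [g [le [Pg ne]]].
  have [d [l1 [Pd Hd]]] := IH g (leq_trans (sum_lt le ne) hk) Pg.
  exists d; split => //; exact: leb_trans l1 le.
move=> H; exists e; split; first by apply/forallP.
split => // g le Pg; apply: NNPP => ne; apply: H; by exists g.
Qed.

Theorem lemma1p8 (K : fieldType) (n m : nat) (hn : (0 < n)%N)
  (I : mpoly K (n + m) -> Prop) (hI : monomial_ideal I) :
  let x1 := @xv K n m (Ordinal hn) in
  (* (a): (I : x_1) ∩ (mT + I) = I, where m = (x_1, ..., x_n) *)
  (forall f : mpoly K (n + m),
      (I (x1 * f) /\
       exists a b, f = a + b /\ ideal_gen (fun g => exists j : 'I_n, g = @xv K n m j) a
                   /\ I b)
      <-> I f)
  <->
  (* (b) *)
  (forall u : mpoly K (n + m), in_mingens I u -> rdvd x1 u ->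
      exists b : 'I_m -> nat, u = x1 * @ymon K n m b /\
        forall j : 'I_n, I (@xv K n m j * @ymon K n m b)).
Proof.
move=> x1.
have [S [HS HI]] := hI.
set x0 := lshift m (Ordinal hn).
have hx1 : x1 = mmon K (dl x0) by rewrite /x1 xv_mmon.
pose inI := fun e : 'I_(n + m) -> nat => exists d, S (mmon K d) /\ leb d e.
have Icrit : forall f, I f <-> forall e, mcoef f e != 0 -> inI e.
  by move=> f; rewrite HI; exact: crit.
have Imon : forall d, I (mmon K d) <-> inI d.
  move=> d; rewrite Icrit; split => [H|H e nz].
    by apply: H; rewrite mcoef_mmon_id oner_neq0.
  have eq := mcoef_mmon_nz nz; move: H => [d' [Sd le]]; exists d'; split => //.
  apply/forallP => i; rewrite -eq; exact: (forallP le).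
have inI_mono : forall d e, leb d e -> inI d -> inI e.
  move=> d e le [d' [S' l']]; exists d'; split => //; exact: leb_trans l' le.
have IM : forall g f, I f -> I (g * f) by move=> g f; rewrite !HI; exact: igM.
have I0 : I 0 by rewrite HI; exact: ig0.
pose Sx := fun g : mpoly K (n + m) => exists j : 'I_n, g = @xv K n m j.
have HSx : forall u, Sx u -> is_monomial u.
  by move=> u [j ->]; exists (dl (lshift m j)); exact: xv_mmon.
have dlle : forall (i i0 : 'I_(n + m)) (d : 'I_(n + m) -> nat), (0 < d i0)%N -> (dl i0 i <= d i)%N.
  by move=> i i0 d h; rewrite /dl; case: (eqVneq i i0) => [->|_] //.
split.
- move=> Ha u [[d ->] [Iu Hmin]] [h Hh].
  have d0 : (0 < d x0)%N.
    have : rdvd (mmon K (dl x0)) (mmon K d) by exists h; rewrite -hx1.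
    by move=> /rdvd_leb /forallP /(_ x0); rewrite /dl eqxx.
  pose d' := fun i => (d i - dl x0 i)%N.
  have Hd : mmon K d = x1 * mmon K d'.
    rewrite hx1 -mmonD; apply: mmon_ext => i; rewrite /d' subnKC //; exact: dlle.
  case: (boolP [exists j : 'I_n, 0 < d' (lshift m j)]%N).
  + move/existsP => [j hj].
    have If : I (mmon K d').
      apply/Ha; split; first by rewrite -Hd.
      exists (mmon K d'), 0; rewrite addr0; split => //; split => //.
      have -> : mmon K d' = mmon K (fun i => d' i - dl (lshift m j) i)%N * @xv K n m j.
        rewrite xv_mmon -mmonD; apply: mmon_ext => i; rewrite subnK //; exact: dlle.
      by apply: igM; apply: igS; exists j.
    have eqd : mmon K d' = mmon K d.
      apply: Hmin => //; [by exists d'|by exists x1; rewrite Hd mulrC].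
    move: eqd => /mmon_inj /(_ x0).
    rewrite /d' /dl eqxx /=; move: d0; case: (d x0) => // k _.
    by rewrite subSS subn0 => /n_Sn.
  + rewrite negb_exists => /forallP H0.
    exists (fun k => d (rshift n k)).
    have Hy : mmon K d' = @ymon K n m (fun k => d (rshift n k)).
      rewrite ymon_mmon; apply: mmon_ext => i; case: (split_ordP i) => [j ->|k ->].
        by rewrite yexp_l; have := H0 j; rewrite lt0n negbK => /eqP.
      by rewrite yexp_r /d' /dl /x0 eq_rlshift subn0.
    split; first by rewrite Hd Hy.
    move=> j; apply/Ha; split.
      by rewrite mulrCA -Hy -Hd; apply: IM.
    exists (@xv K n m j * @ymon K n m (fun k => d (rshift n k))), 0; rewrite addr0.
    split => //; split => //; rewrite mulrC; apply: igM; apply: igS; by exists j.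
- move=> Hb f; split; last first.
    move=> If; split; first exact: IM.
    by exists 0, f; rewrite add0r; split => //; split => //; exact: ig0.
  move=> [Ix [a [b0 [Hf [Ha Ib]]]]].
  apply/Icrit => e nz.
  have Ie1 : inI (fun i => e i + dl x0 i)%N.
    move/Icrit: Ix; apply; rewrite hx1 coef_mmonM.
    have -> : leb (dl x0) (fun i => e i + dl x0 i)%N by apply/forallP => i; exact: leq_addl.
    by rewrite (mcoef_ext _ (e := e)) // => i; rewrite addnK.
  have [d [led [Id Hmin]]] := minimal Ie1.
  case: (boolP (leb d e)) => [le|nle]; first exact: inI_mono le Id.
  have d0 : (0 < d x0)%N.
    move: nle; rewrite /leb negb_forall => /existsP [i]; rewrite -ltnNge => hi.
    have := forallP led i; rewrite /dl; case: (eqVneq i x0) => [<-|_] /=.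
      by move=> _; exact: leq_ltn_trans hi.
    by rewrite addn0 leqNgt hi.
  have Hg : in_mingens I (mmon K d).
    split; first by exists d.
    split; first by apply/Imon.
    move=> v [g ->] Iv dv; have lg := rdvd_leb dv.
    by apply: mmon_ext; apply: Hmin lg _; apply/Imon.
  have Hdv : rdvd x1 (mmon K d).
    exists (mmon K (fun i => d i - dl x0 i)%N); rewrite hx1 -mmonD.
    apply: mmon_ext => i; rewrite subnK //; exact: dlle.
  have [b [Hu Hj]] := Hb _ Hg Hdv.
  have Hdy : forall i, d i = (dl x0 i + @yexp n m b i)%N.
    by apply: (@mmon_inj K); rewrite mmonD -ymon_mmon -hx1.
  rewrite Hf mcoefD in nz.
  case: (eqVneq (mcoef a e) 0) => [ha|ha].
    by rewrite ha add0r in nz; move/Icrit: Ib; apply.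
  have [d2 [[j Hj2] le2]] := (proj1 (crit HSx a) Ha) e ha.
  have e1 : (0 < e (lshift m j))%N.
    move: Hj2; rewrite xv_mmon => /mmon_inj /(_ (lshift m j)).
    rewrite /dl eqxx => h; have := forallP le2 (lshift m j); by rewrite h.
  have := Hj j; rewrite xv_mmon ymon_mmon -mmonD => /Imon; apply: inI_mono.
  apply/forallP => i; case: (split_ordP i) => [j' ->|k ->].
    rewrite yexp_l addn0 /dl eq_lshift; by case: eqP => [->|].
  rewrite yexp_r /dl eq_rlshift add0n.
  have := forallP led (rshift n k); rewrite Hdy /dl /x0 eq_rlshift !add0n addn0.
  by rewrite yexp_r.
Qed.
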